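(* Let $\alpha\in\Phi_+$ and, for each $s\in\mathbb{F}_q^\times$, let $\lambda_{\alpha,s}$ be any linear character of $V_\alpha$ with $\lambda_{\alpha,s}|_{X_\alpha}=\varphi_{\alpha,s}$ and $X_\gamma\subseteq\ker(\lambda_{\alpha,s})$ for all $\gamma\in\Phi_+$ with $\operatorname{ht}(\gamma)>\operatorname{ht}(\alpha)$ (such characters exist). Then the induced characters $\mu_{\alpha,s}:=\lambda_{\alpha,s}^U$, $s\in\mathbb{F}_q^\times$, are $q-1$ pairwise distinct irreducible characters of $U$, and $\mu_{\alpha,s}|_{X_\alpha}=\mu_{\alpha,s}(1)\cdot\varphi_{\alpha,s}$.
   Context: $q$ is a power of a prime $p$. $\Phi$ is a root system of type $D_4$ with simple roots $\alpha_1,\alpha_2,\alpha_3,\alpha_4$ ($\alpha_3$ central node), positive roots $\Phi_+=\{\alpha_1,\dots,\alpha_{12}\}$ with $\alpha_5=\alpha_1+\alpha_3$, $\alpha_6=\alpha_2+\alpha_3$, $\alpha_7=\alpha_3+\alpha_4$, $\alpha_8=\alpha_1+\alpha_2+\alpha_3$, $\alpha_9=\alpha_1+\alpha_3+\alpha_4$, $\alpha_{10}=\alpha_2+\alpha_3+\alpha_4$, $\alpha_{11}=\alpha_1+\alpha_2+\alpha_3+\alpha_4$, $\alpha_{12}=\alpha_1+\alpha_2+2\alpha_3+\alpha_4$; $\operatorname{ht}$ is the height. $U=U(q)$ is the Sylow $p$-subgroup of the Chevalley group $D_4(q)$ generated by $x_i(t)$ ($i=1,\dots,12$, $t\in\mathbb{F}_q$),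 with $x_i(t)x_i(u)=x_i(t+u)$, each element uniquely $x_1(d_1)\cdots x_{12}(d_{12})$, and commutators ($[a,b]=a^{-1}b^{-1}ab$): $[x_1(t),x_3(u)]=x_5(tu)$, $[x_1(t),x_6(u)]=x_8(-tu)$, $[x_1(t),x_7(u)]=x_9(tu)$, $[x_1(t),x_{10}(u)]=x_{11}(-tu)$, $[x_2(t),x_3(u)]=x_6(tu)$, $[x_2(t),x_5(u)]=x_8(-tu)$, $[x_2(t),x_7(u)]=x_{10}(tu)$, $[x_2(t),x_9(u)]=x_{11}(-tu)$, $[x_3(t),x_4(u)]=x_7(tu)$, $[x_3(t),x_{11}(u)]=x_{12}(-tu)$, $[x_4(t),x_5(u)]=x_9(-tu)$, $[x_4(t),x_6(u)]=x_{10}(-tu)$, $[x_4(t),x_8(u)]=x_{11}(-tu)$, $[x_5(t),x_{10}(u)]=x_{12}(-tu)$, $[x_6(t),x_9(u)]=x_{12}(-tu)$, $[x_7(t),x_8(u)]=x_{12}(tu)$, others trivial. $X_{\alpha_i}=\{x_i(t)\}$. Fix a nontrivial linear character $\phi$ of $(\mathbb{F}_q,+)$; $\varphi_{\alpha_i,s}(x_i(d))=\phi(sd)$. Hooks: $h_\alpha=\{\gamma\in\Phi_+:\exists\gamma'\in\Phi_+\cup\{0\},\ \gamma+\gamma'=\alpha\}$; $\operatorname{arm}(h_\alpha)=(h_\alpha\cap h_{\alpha_{12}})\setminus\{\alpha\}$ if $\alpha\neq\alpha_{12}$, $\operatorname{arm}(h_{\alpha_{12}})=\{\alpha_8,\alpha_9,\alpha_{10},\alpha_{11}\}$;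 $\operatorname{leg}(h_\alpha)=h_\alpha\setminus(\operatorname{arm}(h_\alpha)\cup\{\alpha\})$. $V_\alpha=\prod_{\gamma\in\Phi_+\setminus\operatorname{leg}(h_\alpha)}X_\gamma$, a subgroup of $U$. $\chi^U$ denotes induction to $U$. *)

(* Defs.v *)
From HB Require Import structures.
From mathcomp Require Import all_boot all_order all_algebra all_fingroup all_solvable all_field all_character.
Set Implicit Arguments. Unset Strict Implicit. Unset Printing Implicit Defensive.
Import GRing.Theory Num.Theory.

(* Positive roots of D4, indexed 1..12, as coefficient vectors w.r.t.
   (alpha_1, alpha_2, alpha_3, alpha_4); alpha_3 is the central node. *)
Definition rootc (i : nat) : nat * nat * nat * nat :=
  match i with
  | 1 => (1,0,0,0) | 2 => (0,1,0,0) | 3 => (0,0,1,0) | 4 => (0,0,0,1)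
  | 5 => (1,0,1,0) | 6 => (0,1,1,0) | 7 => (0,0,1,1) | 8 => (1,1,1,0)
  | 9 => (1,0,1,1) | 10 => (0,1,1,1) | 11 => (1,1,1,1) | 12 => (1,1,2,1)
  | _ => (0,0,0,0)
  end.

Definition posroots : seq nat := iota 1 12.

Definition radd (a b : nat * nat * nat * nat) : nat * nat * nat * nat :=
  let: (a1, a2, a3, a4) := a in let: (b1, b2, b3, b4) := b in
  (a1 + b1, a2 + b2, a3 + b3, a4 + b4)%N.

Definition ht (i : nat) : nat :=
  let: (a1, a2, a3, a4) := rootc i in (a1 + a2 + a3 + a4)%N.

Definition hook (a : nat) : seq nat :=
  [seq g <- posroots | (g == a) ||
     has (fun g' => radd (rootc g) (rootc g') == rootc a) posroots].

Definition arm (a : nat) : seq nat :=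
  if a == 12 then [:: 8; 9; 10; 11]
  else [seq g <- hook a | (g \in hook 12) && (g != a)].

Definition leg (a : nat) : seq nat :=
  [seq g <- hook a | (g \notin arm a) && (g != a)].

(* Commutator table: for 1 <= i < j <= 12, [x_i(t), x_j(u)] = x_k(+-tu)
   if ctab i j = Some (k, neg) (neg = true means the sign is -),
   and = 1 if ctab i j = None. *)
Definition ctab (i j : nat) : option (nat * bool) :=
  match i, j with
  | 1, 3 => Some (5, false)  | 1, 6 => Some (8, true)
  | 1, 7 => Some (9, false)  | 1, 10 => Some (11, true)
  | 2, 3 => Some (6, false)  | 2, 5 => Some (8, true)
  | 2, 7 => Some (10, false) | 2, 9 => Some (11, true)
  | 3, 4 => Some (7, false)  | 3, 11 => Some (12, true)
  | 4, 5 => Some (9, true)   | 4, 6 => Some (10, true)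
  | 4, 8 => Some (11, true)  | 5, 10 => Some (12, true)
  | 6, 9 => Some (12, true)  | 7, 8 => Some (12, false)
  | _, _ => None
  end.

Section D4.
Variables (F : finFieldType) (gT : finGroupType).

Definition prodx (x : nat -> F -> gT) (d : {ffun 'I_12 -> F}) : gT :=
  (\prod_(i < 12) x i.+1 (d i))%g.

Definition is_D4_unipotent (U : {group gT}) (x : nat -> F -> gT) : Prop :=
  [/\ forall i t, (1 <= i <= 12)%N -> x i t \in U,
      forall i t u, (1 <= i <= 12)%N -> x i (t + u)%R = (x i t * x i u)%g,
      U :=: [set prodx x d | d : {ffun 'I_12 -> F}],
      injective (prodx x) &
      forall i j t u, (1 <= i)%N -> (i < j)%N -> (j <= 12)%N ->
        ([~ x i t, x j u])%g =
          match ctab i j with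
          | Some (k, neg) => x k (if neg then - (t * u) else t * u)%R
          | None => 1%g
          end].

Definition Xset (x : nat -> F -> gT) (g : nat) : {set gT} :=
  [set x g t | t : F].

(* V_a = prod_{g in Phi+ \ leg(h_a)} X_g (product in increasing order of the
   index); the paper asserts it is a subgroup, we take the group it
   generates (equal to it). *)
Definition Vset (x : nat -> F -> gT) (a : nat) : {set gT} :=
  (\prod_(g <- [seq g <- posroots | g \notin leg a]) Xset x g)%g.

Definition Vgroup (x : nat -> F -> gT) (a : nat) : {group gT} :=
  <<Vset x a>>%G.

End D4.

(* Main.v *)
Require Import Defs.
From HB Require Import structures.
From mathcomp Require Import all_boot all_order all_algebra all_fingroup all_solvable all_field all_character.
From mathcomp Require Import zify ring.
Import GRing.Theory Num.Theory.
Set Implicit Arguments. Unset Strict Implicit.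
Local Open Scope ring_scope.

Definition ctab_ok : bool :=
  all (fun i => all (fun j => if ctab i j is Some (k, _) then
     (1 <= k <= 12)%N && (ht k == ht i + ht j)%N else true) (iota 1 12)) (iota 1 12).
Lemma ctab_okT : ctab_ok. Proof. by []. Qed.

Lemma ctab_spec i j k b : (1 <= i <= 12)%N -> (1 <= j <= 12)%N -> ctab i j = Some (k, b) ->
  (1 <= k <= 12)%N /\ ht k = (ht i + ht j)%N.
Proof.
move=> Hi Hj E; have /allP/(_ i) := ctab_okT.
have iin : i \in iota 1 12 by rewrite mem_iota; lia.
have jin : j \in iota 1 12 by rewrite mem_iota; lia.
move=> /(_ iin) /allP /(_ j jin); rewrite E => /andP[-> /eqP ->]; by [].
Qed.

Lemma ht_pos k : (0 < ht k)%N -> (1 <= k <= 12)%N.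
Proof. by do 13! (case: k => [|k] //). Qed.

Lemma ht_ge1 k : (1 <= k <= 12)%N -> (1 <= ht k)%N.
Proof. by move=> /andP[]; do 13! (case: k => [|k] //). Qed.

Section Basic.
Local Open Scope group_scope.
Variables (F : finFieldType) (gT : finGroupType) (U : {group gT}) (x : nat -> F -> gT).
Hypothesis HU : is_D4_unipotent U x.

Definition cv i j (t u : F) : gT :=
  match ctab i j with
  | Some (k, neg) => x k (if neg then - (t * u) else t * u)%R
  | None => 1
  end.

Lemma xU i t : (1 <= i <= 12)%N -> x i t \in U.
Proof. by case: HU => H _ _ _ _; apply: H. Qed.

Lemma xD i t u : (1 <= i <= 12)%N -> x i (t + u)%R = x i t * x i u.
Proof. by case: HU => _ H _ _ _; apply: H. Qed.

Lemma x0 i : (1 <= i <= 12)%N -> x i 0 = 1.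
Proof.
move=> Hi; apply: (@mulgI _ (x i 0)); by rewrite -xD // addr0 mulg1.
Qed.

Lemma xV i t : (1 <= i <= 12)%N -> (x i t)^-1 = x i (- t)%R.
Proof.
move=> Hi; apply: (@mulgI _ (x i t)); by rewrite mulgV -xD // subrr x0.
Qed.

Lemma xcomm i j t u : (1 <= i)%N -> (i < j)%N -> (j <= 12)%N -> [~ x i t, x j u] = cv i j t u.
Proof. by case: HU => _ _ _ _ H; apply: H. Qed.

Lemma cvV i j t u : (1 <= i)%N -> (i < j)%N -> (j <= 12)%N -> (cv i j t u)^-1 = cv i j (- t)%R u.
Proof.
move=> Hi Hij Hj; rewrite /cv; case E: (ctab i j) => [[k b]|]; last by rewrite invg1.
have Hi2 : (1 <= i <= 12)%N by lia.
have Hj2 : (1 <= j <= 12)%N by lia.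
have [Hk _] := ctab_spec Hi2 Hj2 E.
by rewrite xV //; case: b {E}; rewrite mulNr ?opprK.
Qed.

Lemma conjL i j t u : (1 <= i)%N -> (i < j)%N -> (j <= 12)%N -> x i t ^ x j u = x i t * cv i j t u.
Proof. by move=> *; rewrite conjg_mulR xcomm. Qed.

Lemma conjR i j t u : (1 <= i)%N -> (i < j)%N -> (j <= 12)%N -> x j u ^ x i t = x j u * cv i j (- t)%R u.
Proof. by move=> *; rewrite conjg_mulR -invg_comm xcomm // cvV. Qed.

Lemma swapL i j t u : (1 <= i)%N -> (i < j)%N -> (j <= 12)%N ->
  x i t * x j u = x j u * (x i t * cv i j t u).
Proof. by move=> *; rewrite conjgC conjL. Qed.

Lemma conj_same i t u : (1 <= i <= 12)%N -> x i t ^ x i u = x i t.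
Proof. by move=> Hi; rewrite conjgE xV // -!xD // addrC addrK. Qed.

Definition cx i j (t u : F) : gT :=
  if (i < j)%N then cv i j t u else if (j < i)%N then cv j i (- u)%R t else 1.

Lemma conjx i j t u : (1 <= i <= 12)%N -> (1 <= j <= 12)%N -> x i t ^ x j u = x i t * cx i j t u.
Proof.
move=> Hi Hj; rewrite /cx; case: ltngtP => H.
- by apply: conjL; lia.
- by apply: conjR; lia.
- by subst j; rewrite conj_same // mulg1.
Qed.

Lemma commx i j t u : (1 <= i)%N -> (i < j)%N -> (j <= 12)%N -> ctab i j = None ->
  x i t * x j u = x j u * x i t.
Proof. by move=> Hi Hij Hj E; rewrite swapL // /cv E mulg1. Qed.

End Basic.

Section Part3.
Local Open Scope group_scope.
Variables (F : finFieldType) (gT : finGroupType) (U : {group gT}) (x : nat -> F -> gT).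
Hypothesis HU : is_D4_unipotent U x.

Lemma comm_gen i j t u : (1 <= i <= 12)%N -> (1 <= j <= 12)%N ->
  [~ x j t, x i u] = 1 \/ exists k e, [/\ [~ x j t, x i u] = x k e, (1 <= k <= 12)%N & ht k = (ht i + ht j)%N].
Proof.
move=> Hi Hj; case: (ltngtP i j) => Hij.
- rewrite -invg_comm (xcomm HU) //; try lia. rewrite (cvV HU); try lia.
  rewrite /cv; case E: (ctab i j) => [[k b]|]; last by left.
  have [Hk Hh] := ctab_spec Hi Hj E; right; by exists k, (if b then - (- u * t) else - u * t)%R.
- rewrite (xcomm HU) //; try lia.
  rewrite /cv; case E: (ctab j i) => [[k b]|]; last by left.
  have [Hk Hh] := ctab_spec Hj Hi E; right; exists k, (if b then - (t * u) else t * u)%R; split=> //; lia.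
- subst j; left; by rewrite commgEl (conj_same HU) // mulVg.
Qed.

Lemma U_prod y : y \in U -> exists d, y = prodx x d.
Proof. by case: HU => _ _ -> _ _ /imsetP[d _ ->]; exists d. Qed.

Variable a : nat.
Hypothesis Ha : (1 <= a <= 12)%N.

Definition Nset := \bigcup_(k < 13 | (ht a < ht k)%N) Xset x k.
Definition Ngrp := <<Nset>>%G.

Lemma xN k e : (ht a < ht k)%N -> x k e \in Ngrp.
Proof.
move=> Hk; have /ht_pos Hk2 : (0 < ht k)%N by lia.
apply: mem_gen; apply/bigcupP; exists (Ordinal (n:=13) (m:=k) ltac:(lia)) => //.
by apply/imsetP; exists e.
Qed.

Lemma norm_x i u : (1 <= i <= 12)%N -> x i u \in 'N(Ngrp).
Proof.
move=> Hi; apply/normP; apply/eqP; rewrite eqEcard cardJg leqnn andbT.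
rewrite /Ngrp /= -genJ gen_subG; apply/subsetP => _ /imsetP[y /bigcupP[k Hk /imsetP[e _ ->]] ->].
have /ht_pos Hk2 : (0 < ht k)%N by lia.
rewrite conjg_mulR groupM ?xN //.
have := ht_ge1 Hi.
case: (comm_gen e u Hi Hk2) => [->|[k' [e' [-> _ Hh]]]]; first by rewrite group1.
move=> ?; apply: xN; lia.
Qed.

Lemma comm_N d y : y \in U -> [~ x a d, y] \in Ngrp.
Proof.
move=> /U_prod [d' ->]; rewrite /prodx.
suff : ([~ x a d, \prod_(i < 12) x i.+1 (d' i)] \in Ngrp) && (\prod_(i < 12) x i.+1 (d' i) \in 'N(Ngrp)) by case/andP.
apply: (big_ind (fun y => ([~ x a d, y] \in Ngrp) && (y \in 'N(Ngrp)))).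
- by rewrite commg1 !group1.
- move=> y1 y2 /andP[h1 n1] /andP[h2 n2]; rewrite commgMJ; apply/andP; split; [apply: groupM => //; by rewrite memJ_norm | exact: groupM].
- move=> i _; have Hi : (1 <= i.+1 <= 12)%N by have := ltn_ord i; lia.
  rewrite norm_x // andbT.
  have := ht_ge1 Hi.
  case: (comm_gen d (d' i) Hi Ha) => [->|[k' [e' [-> _ Hh]]]]; first by rewrite group1.
  move=> ?; apply: xN; lia.
Qed.

End Part3.

Section VLemmas.
Local Open Scope group_scope.
Variables (F : finFieldType) (gT : finGroupType) (U : {group gT}) (x : nat -> F -> gT).
Hypothesis HU : is_D4_unipotent U x.

Lemma X1 g : (1 <= g <= 12)%N -> 1 \in Xset x g.
Proof. by move=> Hg; apply/imsetP; exists 0%R => //; rewrite (x0 HU). Qed.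

Lemma prod_one (s : seq nat) : (forall g', g' \in s -> (1 <= g' <= 12)%N) ->
  1 \in \prod_(g' <- s) Xset x g'.
Proof.
elim: s => [|h s IH] Hs; first by rewrite big_nil inE.
rewrite big_cons -[1]mulg1; apply: mem_mulg; first by apply: X1; apply: Hs; rewrite inE eqxx.
by apply: IH => g' Hg'; apply: Hs; rewrite inE Hg' orbT.
Qed.

Lemma prod_mem (s : seq nat) g t : g \in s -> (forall g', g' \in s -> (1 <= g' <= 12)%N) ->
  x g t \in \prod_(g' <- s) Xset x g'.
Proof.
elim: s => // h s IH; rewrite inE => Hg Hs; rewrite big_cons.
have Hs' : forall g', g' \in s -> (1 <= g' <= 12)%N by move=> g' Hg'; apply: Hs; rewrite inE Hg' orbT.
case/orP: Hg => [/eqP ->|Hg].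
- rewrite -[x h t]mulg1; apply: mem_mulg; first by apply/imsetP; exists t.
  exact: prod_one.
- rewrite -[x g t]mul1g; apply: mem_mulg; last exact: IH.
  by apply: X1; apply: Hs; rewrite inE eqxx.
Qed.

Lemma xinV a g t : (1 <= g <= 12)%N -> g \notin leg a -> x g t \in Vgroup x a.
Proof.
move=> Hg Hl; apply: mem_gen; apply: prod_mem.
  by rewrite mem_filter Hl /posroots mem_iota; lia.
by move=> g'; rewrite mem_filter /posroots mem_iota => /andP[_ ?]; lia.
Qed.

Lemma VsubU a : Vgroup x a \subset U.
Proof.
rewrite gen_subG /Vset big_seq; apply: (big_ind (fun A : {set gT} => A \subset U)).
- by rewrite sub1G.
- by move=> A B; apply: mul_subG.
- move=> g; rewrite mem_filter /posroots mem_iota => /andP[_ Hg]; apply/subsetP => _ /imsetP[t _ ->].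
  apply: (xU HU); lia.
Qed.

End VLemmas.

Section Chars.
Variables (F : finFieldType) (gT : finGroupType) (U : {group gT}) (x : nat -> F -> gT).
Hypothesis HU : is_D4_unipotent U x.
Variable phi : F -> algC.
Hypothesis Hphi : forall a b : F, phi (a + b) = phi a * phi b.
Variable a0 : F.
Hypothesis Ha0 : phi a0 != 1.
Variable a : nat.
Hypothesis Ha : (1 <= a <= 12)%N.
Variable lam : 'CF(Vgroup x a).
Variable s : F.
Hypothesis Hlin : lam \is a linear_char.
Hypothesis Hval : forall d : F, lam (x a d) = phi (s * d).
Hypothesis Hker : forall g : nat, g \in posroots -> (ht a < ht g)%N -> Xset x g \subset cfker lam.

Local Notation V := (Vgroup x a).

Lemma VU : V \subset U. Proof. exact: VsubU HU a. Qed.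

Lemma N_ker : Ngrp x a \subset cfker lam.
Proof.
rewrite gen_subG; apply/bigcupsP => k Hk; apply: Hker => //.
have /ht_pos : (0 < ht k)%N by lia.
by rewrite /posroots mem_iota; lia.
Qed.

Lemma Ind_Xa d : 'Ind[U] lam (x a d) = 'Ind[U] lam 1%g * phi (s * d).
Proof.
rewrite cfIndE ?VU // cfInd1 ?VU // lin_char1 // mulr1.
rewrite (eq_bigr (fun _ => phi (s * d))); last first.
  move=> y Hy; rewrite conjg_mulR cfkerMr ?Hval //.
  by apply: (subsetP N_ker); apply: (comm_N HU).
rewrite sumr_const -(Lagrange VU) -[phi _ *+ _]mulr_natl natrM !mulrA mulVf ?mul1r //.
by rewrite pnatr_eq0 -lt0n cardG_gt0.
Qed.

Definition wit (y : gT) := exists w, [/\ w \in V, (w ^ y)%g \in V & lam (w ^ y)%g != lam w].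

Lemma wit_strip v1 z v2 : v1 \in V -> v2 \in V -> wit z -> wit (v1 * z * v2)%g.
Proof.
move=> H1 H2 [w [Hw Hwz Hne]]; exists (w ^ v1^-1)%g.
have E : ((w ^ v1^-1) ^ (v1 * z * v2) = (w ^ z) ^ v2)%g.
  by rewrite -!conjgM !mulgA mulVg mul1g.
rewrite E; split; [by rewrite groupJ ?groupV | by rewrite groupJ | by rewrite (cfunJ _ _ H2) (cfunJ _ _ (groupVr H1))].
Qed.

Lemma xaV e : x a e \in V.
Proof.
apply: (xinV HU) => //.
by rewrite /leg mem_filter eqxx andbF.
Qed.

Lemma wit_of z w e : w \in V -> (w ^ z = w * x a e)%g -> phi (s * e) != 1 -> wit z.
Proof.
move=> Hw E Hp; exists w; rewrite E groupM ?xaV //; split=> //.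
rewrite lin_charM ?xaV // Hval; apply: contra Hp => /eqP H.
have := lin_char_neq0 Hlin Hw; move: H.
by rewrite -{2}[lam w]mulr1 => /(mulfI) H /H ->.
Qed.

Lemma wit_ofN z w e n : w \in V -> (w ^ z = w * (x a e * n))%g -> n \in Ngrp x a -> phi (s * e) != 1 -> wit z.
Proof.
move=> Hw E Hn Hp; have Hn' := subsetP N_ker _ Hn.
have HnV : n \in V by apply: (subsetP (cfker_sub lam)).
have HaV := xaV e.
exists w; rewrite E mulgA; split=> //; first by rewrite !groupM.
rewrite cfkerMr // lin_charM ?xaV // Hval; apply: contra Hp => /eqP H.
have := lin_char_neq0 Hlin Hw; move: H.
by rewrite -{2}[lam w]mulr1 => /(mulfI) H /H ->.
Qed.

Lemma phi0 : phi 0 = 1.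
Proof. by rewrite -(mulr0 s) -Hval (x0 HU) // lin_char1. Qed.

Lemma phiN v : phi v != 1 -> phi (- v) != 1.
Proof.
apply: contra => /eqP H; apply/eqP.
by rewrite -[phi v]mul1r -H -Hphi addNr phi0.
Qed.

Lemma phi_ne1 k : k != 0 -> exists t, phi (k * t) != 1.
Proof. by move=> Hk; exists (a0 / k); rewrite mulrC divfK. Qed.

Lemma Ind_irr : (forall y, y \in U -> y \in V \/ wit y) -> 'Ind[U] lam \in irr U.
Proof.
move=> Hall; rewrite irrEchar cfInd_char ?lin_charW //=.
rewrite -Frobenius_reciprocity cfdotC.
suff -> : '['Res[V] ('Ind[U] lam), lam] = 1 by rewrite conjC1.
rewrite cfdotE.
rewrite (eq_bigr (fun v => #|V|%:R^-1 * (\sum_(y in U) lam (v ^ y)%g * (lam v)^*))); last first.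
  by move=> v Hv; rewrite cfResE ?VU // cfIndE ?VU // -mulrA mulr_suml.
rewrite -mulr_sumr exchange_big /=.
have Tin : forall y, y \in V -> \sum_(v in V) lam (v ^ y)%g * (lam v)^* = #|V|%:R.
  move=> y Hy; rewrite -sumr_const; apply: eq_bigr => v Hv.
  by rewrite cfunJ // -lin_charV_conj // -lin_charM ?groupV // mulgV lin_char1.
have Tout : forall y, wit y -> \sum_(v in V) lam (v ^ y)%g * (lam v)^* = 0.
  move=> y [w [Hw Hwy Hne]].
  set T := \sum_(v in V) _.
  have E : T = (lam (w ^ y)%g * (lam w)^*) * T.
    rewrite /T mulr_sumr (reindex_inj (mulgI w)) /=.
    apply: eq_big => [v|v Hv]; first by rewrite groupMl.
    have Hv' : v \in V by rewrite -(groupMl v Hw).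
    rewrite conjMg; case: (boolP ((v ^ y)%g \in V)) => Hvy.
      rewrite (lin_charM Hlin Hwy Hvy) (lin_charM Hlin Hw Hv') rmorphM /=; ring.
    have Hn : ((w ^ y) * (v ^ y))%g \notin V by rewrite groupMl.
    by rewrite (cfun0 _ Hn) (cfun0 _ Hvy) !mul0r mulr0.
  have E2 : (lam (w ^ y)%g * (lam w)^* - 1) * T = 0 by rewrite mulrBl mul1r -E subrr.
  move/eqP: E2; rewrite mulf_eq0 => /orP[|/eqP //].
  rewrite subr_eq0 => /eqP E1; exfalso; move/negP: Hne; apply.
  have := lin_char_neq0 Hlin Hw => Hw0.
  have Hc : (lam w)^* * lam w = 1.
    by rewrite -lin_charV_conj // -lin_charM ?groupV // mulVg lin_char1.
  by apply/eqP; rewrite -[lam (w ^ y)%g]mulr1 -Hc mulrA E1 mul1r.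
rewrite (bigID (fun y => y \in V)) /= [X in _ + X]big1 ?addr0; last first.
  move=> y /andP[Hy Hny]; case: (Hall y Hy) => [Hv|]; first by rewrite Hv in Hny.
  exact: Tout.
rewrite (eq_bigr (fun _ => #|V|%:R)); last by move=> y /andP[_ Hy]; apply: Tin.
rewrite sumr_const.
have -> : #|[pred y in U | y \in V]| = #|V|.
  apply: eq_card => y; rewrite !inE; case Hy: (y \in V); rewrite ?andbT ?andbF //.
  by rewrite (subsetP VU).
have Vn0 : (#|V|%:R : algC) != 0 by rewrite pnatr_eq0 -lt0n cardG_gt0.
by rewrite -mulr_natr; field.
Qed.

End Chars.
Definition nf (F : finFieldType) (gT : finGroupType) (x : nat -> F -> gT) (c1 c2 c3 c4 c5 c6 c7 c8 c9 c10 c11 c12 : F) : gT :=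
  (x 1%N c1 * (x 2%N c2 * (x 3%N c3 * (x 4%N c4 * (x 5%N c5 * (x 6%N c6 * (x 7%N c7 * (x 8%N c8 * (x 9%N c9 * (x 10%N c10 * (x 11%N c11 * (x 12%N c12 * 1))))))))))))%g.

Lemma prodx_nf (F : finFieldType) (gT : finGroupType) (x : nat -> F -> gT) d :
  exists c1 c2 c3 c4 c5 c6 c7 c8 c9 c10 c11 c12, prodx x d = nf x c1 c2 c3 c4 c5 c6 c7 c8 c9 c10 c11 c12.
Proof.
rewrite /prodx !big_ord_recl big_ord0 /=.
by do 12! eexists.
Qed.

Lemma phiN' (F : finFieldType) (phi : F -> algC) :
  (forall a b : F, phi (a + b) = phi a * phi b) -> phi 0 = 1 ->
  forall v, phi v != 1 -> phi (- v) != 1.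
Proof.
move=> Hphi P0 v; apply: contra => /eqP H; apply/eqP.
by rewrite -[phi v]mul1r -H -Hphi addNr P0.
Qed.

Arguments conjg : simpl never.

Definition cj (gT : finGroupType) (w z : gT) : gT := locked (w ^ z)%g.
Lemma cjE (gT : finGroupType) (w z : gT) : cj w z = (w ^ z)%g. Proof. by rewrite /cj -lock. Qed.
Lemma cjM (gT : finGroupType) (w y z : gT) : cj w (y * z)%g = cj (cj w y) z.
Proof. by rewrite !cjE conjgM. Qed.
Lemma cjMg (gT : finGroupType) (a b z : gT) : cj (a * b)%g z = (cj a z * cj b z)%g.
Proof. by rewrite !cjE conjMg. Qed.
Lemma cj1g (gT : finGroupType) (z : gT) : cj 1%g z = 1%g.
Proof. by rewrite cjE conj1g. Qed.
Lemma cjx {F : finFieldType} {gT : finGroupType} {U : {group gT}} {x : nat -> F -> gT} (HU : is_D4_unipotent U x) i j t u :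
  (1 <= i <= 12)%N -> (1 <= j <= 12)%N -> cj (x i t) (x j u) = (x i t * cx x i j t u)%g.
Proof. by move=> *; rewrite cjE (conjx HU). Qed.
Arguments commg : simpl never.

Lemma leg1 : leg 1 = [::]. Proof. by vm_compute. Qed.
Lemma leg2 : leg 2 = [::]. Proof. by vm_compute. Qed.
Lemma leg3 : leg 3 = [::]. Proof. by vm_compute. Qed.
Lemma leg4 : leg 4 = [::]. Proof. by vm_compute. Qed.
Lemma leg5 : leg 5 = [:: 1]. Proof. by vm_compute. Qed.
Lemma leg6 : leg 6 = [:: 2]. Proof. by vm_compute. Qed.
Lemma leg7 : leg 7 = [:: 4]. Proof. by vm_compute. Qed.
Lemma leg8 : leg 8 = [:: 1; 2]. Proof. by vm_compute. Qed.
Lemma leg9 : leg 9 = [:: 1; 4]. Proof. by vm_compute. Qed.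
Lemma leg10 : leg 10 = [:: 2; 4]. Proof. by vm_compute. Qed.
Lemma leg11 : leg 11 = [:: 1; 2; 4]. Proof. by vm_compute. Qed.
Lemma leg12 : leg 12 = [:: 3; 5; 6; 7]. Proof. by vm_compute. Qed.
Definition legE := (leg1, leg2, leg3, leg4, leg5, leg6, leg7, leg8, leg9, leg10, leg11, leg12).

Ltac inV HU := repeat first [ apply: group1 | apply: groupM | (apply: (xinV HU); [by [] | rewrite legE; by []]) ].
Ltac csimp HU := rewrite -cjE ?cjM; repeat progress (rewrite ?cjMg ?cj1g ?(cjx HU) //= /cx /cv /= ?mulg1 ?mul1g).
Ltac phitac Hphi P0 Hp :=
  match type of Hp with is_true (?f (?k * ?t) != 1) =>
    first [ (rewrite (_ : _ * _ = k * t); [exact Hp | by ring])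
          | (rewrite (_ : _ * _ = - (k * t)); [exact: (phiN' Hphi P0 Hp) | by ring]) ] end.

Section Roots.
Local Close Scope ring_scope.
Local Open Scope group_scope.
Variables (F : finFieldType) (gT : finGroupType) (U : {group gT}) (x : nat -> F -> gT).
Hypothesis HU : is_D4_unipotent U x.
Variable phi : F -> algC.
Hypothesis Hphi : forall a b : F, phi (a + b)%R = (phi a * phi b)%R.
Variable a0 : F.
Hypothesis Ha0 : (phi a0 != 1)%R.

Lemma root12 (lam : 'CF(Vgroup x 12)) s : (s != 0)%R -> lam \is a linear_char ->
  (forall d, lam (x 12 d) = phi (s * d)%R) ->
  forall c1 c2 c3 c4 c5 c6 c7 c8 c9 c10 c11 c12,
  nf x c1 c2 c3 c4 c5 c6 c7 c8 c9 c10 c11 c12 \in Vgroup x 12 \/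
  wit lam (nf x c1 c2 c3 c4 c5 c6 c7 c8 c9 c10 c11 c12).
Proof.
move=> Hs Hlin Hval c1 c2 c3 c4 c5 c6 c7 c8 c9 c10 c11 c12.
have P0 : phi 0%R = 1%R := phi0 HU (isT : (1 <= 12 <= 12)%N) Hlin Hval.
have R : (x 8 c8 * (x 9 c9 * (x 10 c10 * (x 11 c11 * (x 12 c12 * 1)))))%g \in Vgroup x 12 by inV HU.
rewrite /nf.
have [Z3|N3] := eqVneq c3 0%R; last first.
  right; have [t Ht] := phi_ne1 Ha0 (mulf_neq0 Hs N3).
  rewrite (_ : (x 1%N c1 * _)%g = (x 1 c1 * x 2 c2) * (x 3 c3 * x 4 c4 * x 5 c5 * x 6 c6 * x 7 c7) * (x 8 c8 * (x 9 c9 * (x 10 c10 * (x 11 c11 * (x 12 c12 * 1))))))%g; last by rewrite !mulgA.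
  apply: wit_strip; [by inV HU | exact: R |].
  apply: (wit_of HU (a := 12) _ Hlin Hval (w := x 11 t)); [by [] | by inV HU | by csimp HU | phitac Hphi P0 Ht].
rewrite Z3 (x0 HU) // mul1g.
have [Z5|N5] := eqVneq c5 0%R; last first.
  right; have [t Ht] := phi_ne1 Ha0 (mulf_neq0 Hs N5).
  rewrite (_ : (x _ _ * _) = (x 1 c1 * x 2 c2 * x 4 c4) * (x 5 c5 * x 6 c6 * x 7 c7) * (x 8 c8 * (x 9 c9 * (x 10 c10 * (x 11 c11 * (x 12 c12 * 1)))))); last by rewrite !mulgA.
  apply: wit_strip; [by inV HU | exact: R |].
  apply: (wit_of HU (a := 12) _ Hlin Hval (w := x 10 t)); [by [] | by inV HU | by csimp HU | phitac Hphi P0 Ht].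
rewrite Z5 (x0 HU) // mul1g.
have [Z6|N6] := eqVneq c6 0%R; last first.
  right; have [t Ht] := phi_ne1 Ha0 (mulf_neq0 Hs N6).
  rewrite (_ : (x _ _ * _) = (x 1 c1 * x 2 c2 * x 4 c4) * (x 6 c6 * x 7 c7) * (x 8 c8 * (x 9 c9 * (x 10 c10 * (x 11 c11 * (x 12 c12 * 1)))))); last by rewrite !mulgA.
  apply: wit_strip; [by inV HU | exact: R |].
  apply: (wit_of HU (a := 12) _ Hlin Hval (w := x 9 t)); [by [] | by inV HU | by csimp HU | phitac Hphi P0 Ht].
rewrite Z6 (x0 HU) // mul1g.
have [Z7|N7] := eqVneq c7 0%R; last first.
  right; have [t Ht] := phi_ne1 Ha0 (mulf_neq0 Hs N7).
  rewrite (_ : (x _ _ * _) = (x 1 c1 * x 2 c2 * x 4 c4) * (x 7 c7) * (x 8 c8 * (x 9 c9 * (x 10 c10 * (x 11 c11 * (x 12 c12 * 1)))))); last by rewrite !mulgA.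
  apply: wit_strip; [by inV HU | exact: R |].
  apply: (wit_of HU (a := 12) _ Hlin Hval (w := x 8 t)); [by [] | by inV HU | by csimp HU | phitac Hphi P0 Ht].
rewrite Z7 (x0 HU) // mul1g.
by left; inV HU.
Qed.

Lemma root1 (lam : 'CF(Vgroup x 1)) s : (s != 0)%R -> lam \is a linear_char ->
  (forall d, lam (x 1 d) = phi (s * d)%R) ->
  (forall g : nat, g \in posroots -> ht 1 < ht g -> Xset x g \subset cfker lam) ->
  forall c1 c2 c3 c4 c5 c6 c7 c8 c9 c10 c11 c12,
  nf x c1 c2 c3 c4 c5 c6 c7 c8 c9 c10 c11 c12 \in Vgroup x 1 \/
  wit lam (nf x c1 c2 c3 c4 c5 c6 c7 c8 c9 c10 c11 c12).
Proof.
move=> Hs Hlin Hval Hker c1 c2 c3 c4 c5 c6 c7 c8 c9 c10 c11 c12.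
have P0 : phi 0%R = 1%R := phi0 HU (isT : (1 <= 1 <= 12)%N) Hlin Hval.
rewrite /nf.
by left; inV HU.
Qed.

Lemma root2 (lam : 'CF(Vgroup x 2)) s : (s != 0)%R -> lam \is a linear_char ->
  (forall d, lam (x 2 d) = phi (s * d)%R) ->
  (forall g : nat, g \in posroots -> ht 2 < ht g -> Xset x g \subset cfker lam) ->
  forall c1 c2 c3 c4 c5 c6 c7 c8 c9 c10 c11 c12,
  nf x c1 c2 c3 c4 c5 c6 c7 c8 c9 c10 c11 c12 \in Vgroup x 2 \/
  wit lam (nf x c1 c2 c3 c4 c5 c6 c7 c8 c9 c10 c11 c12).
Proof.
move=> Hs Hlin Hval Hker c1 c2 c3 c4 c5 c6 c7 c8 c9 c10 c11 c12.
have P0 : phi 0%R = 1%R := phi0 HU (isT : (1 <= 2 <= 12)%N) Hlin Hval.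
rewrite /nf.
by left; inV HU.
Qed.

Lemma root3 (lam : 'CF(Vgroup x 3)) s : (s != 0)%R -> lam \is a linear_char ->
  (forall d, lam (x 3 d) = phi (s * d)%R) ->
  (forall g : nat, g \in posroots -> ht 3 < ht g -> Xset x g \subset cfker lam) ->
  forall c1 c2 c3 c4 c5 c6 c7 c8 c9 c10 c11 c12,
  nf x c1 c2 c3 c4 c5 c6 c7 c8 c9 c10 c11 c12 \in Vgroup x 3 \/
  wit lam (nf x c1 c2 c3 c4 c5 c6 c7 c8 c9 c10 c11 c12).
Proof.
move=> Hs Hlin Hval Hker c1 c2 c3 c4 c5 c6 c7 c8 c9 c10 c11 c12.
have P0 : phi 0%R = 1%R := phi0 HU (isT : (1 <= 3 <= 12)%N) Hlin Hval.
rewrite /nf.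
by left; inV HU.
Qed.

Lemma root4 (lam : 'CF(Vgroup x 4)) s : (s != 0)%R -> lam \is a linear_char ->
  (forall d, lam (x 4 d) = phi (s * d)%R) ->
  (forall g : nat, g \in posroots -> ht 4 < ht g -> Xset x g \subset cfker lam) ->
  forall c1 c2 c3 c4 c5 c6 c7 c8 c9 c10 c11 c12,
  nf x c1 c2 c3 c4 c5 c6 c7 c8 c9 c10 c11 c12 \in Vgroup x 4 \/
  wit lam (nf x c1 c2 c3 c4 c5 c6 c7 c8 c9 c10 c11 c12).
Proof.
move=> Hs Hlin Hval Hker c1 c2 c3 c4 c5 c6 c7 c8 c9 c10 c11 c12.
have P0 : phi 0%R = 1%R := phi0 HU (isT : (1 <= 4 <= 12)%N) Hlin Hval.
rewrite /nf.
by left; inV HU.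
Qed.

Lemma root5 (lam : 'CF(Vgroup x 5)) s : (s != 0)%R -> lam \is a linear_char ->
  (forall d, lam (x 5 d) = phi (s * d)%R) ->
  (forall g : nat, g \in posroots -> ht 5 < ht g -> Xset x g \subset cfker lam) ->
  forall c1 c2 c3 c4 c5 c6 c7 c8 c9 c10 c11 c12,
  nf x c1 c2 c3 c4 c5 c6 c7 c8 c9 c10 c11 c12 \in Vgroup x 5 \/
  wit lam (nf x c1 c2 c3 c4 c5 c6 c7 c8 c9 c10 c11 c12).
Proof.
move=> Hs Hlin Hval Hker c1 c2 c3 c4 c5 c6 c7 c8 c9 c10 c11 c12.
have P0 : phi 0%R = 1%R := phi0 HU (isT : (1 <= 5 <= 12)%N) Hlin Hval.
rewrite /nf.
have [Z1|N1] := eqVneq c1 0%R; last first.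
  right; have [t Ht] := phi_ne1 Ha0 (mulf_neq0 Hs N1).
  rewrite (_ : (x _ _ * _) = 1 * (x 1 c1) * (x 2 c2 * (x 3 c3 * (x 4 c4 * (x 5 c5 * (x 6 c6 * (x 7 c7 * (x 8 c8 * (x 9 c9 * (x 10 c10 * (x 11 c11 * (x 12 c12 * 1)))))))))))); last by rewrite ?mul1g !mulgA.
  apply: wit_strip; [by inV HU | by inV HU |].
  apply: (wit_of HU (a := 5) _ Hlin Hval (w := x 3 t)); [by [] | by inV HU | by csimp HU | phitac Hphi P0 Ht].
rewrite Z1 (x0 HU) // ?mul1g.
by left; inV HU.
Qed.

Lemma root6 (lam : 'CF(Vgroup x 6)) s : (s != 0)%R -> lam \is a linear_char ->
  (forall d, lam (x 6 d) = phi (s * d)%R) ->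
  (forall g : nat, g \in posroots -> ht 6 < ht g -> Xset x g \subset cfker lam) ->
  forall c1 c2 c3 c4 c5 c6 c7 c8 c9 c10 c11 c12,
  nf x c1 c2 c3 c4 c5 c6 c7 c8 c9 c10 c11 c12 \in Vgroup x 6 \/
  wit lam (nf x c1 c2 c3 c4 c5 c6 c7 c8 c9 c10 c11 c12).
Proof.
move=> Hs Hlin Hval Hker c1 c2 c3 c4 c5 c6 c7 c8 c9 c10 c11 c12.
have P0 : phi 0%R = 1%R := phi0 HU (isT : (1 <= 6 <= 12)%N) Hlin Hval.
rewrite /nf.
have [Z2|N2] := eqVneq c2 0%R; last first.
  right; have [t Ht] := phi_ne1 Ha0 (mulf_neq0 Hs N2).
  rewrite (_ : (x _ _ * _) = (x 1 c1) * (x 2 c2) * (x 3 c3 * (x 4 c4 * (x 5 c5 * (x 6 c6 * (x 7 c7 * (x 8 c8 * (x 9 c9 * (x 10 c10 * (x 11 c11 * (x 12 c12 * 1))))))))))); last by rewrite ?mul1g !mulgA.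
  apply: wit_strip; [by inV HU | by inV HU |].
  apply: (wit_of HU (a := 6) _ Hlin Hval (w := x 3 t)); [by [] | by inV HU | by csimp HU | phitac Hphi P0 Ht].
rewrite Z2 (x0 HU) // ?mul1g.
by left; inV HU.
Qed.

Lemma root7 (lam : 'CF(Vgroup x 7)) s : (s != 0)%R -> lam \is a linear_char ->
  (forall d, lam (x 7 d) = phi (s * d)%R) ->
  (forall g : nat, g \in posroots -> ht 7 < ht g -> Xset x g \subset cfker lam) ->
  forall c1 c2 c3 c4 c5 c6 c7 c8 c9 c10 c11 c12,
  nf x c1 c2 c3 c4 c5 c6 c7 c8 c9 c10 c11 c12 \in Vgroup x 7 \/
  wit lam (nf x c1 c2 c3 c4 c5 c6 c7 c8 c9 c10 c11 c12).
Proof.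
move=> Hs Hlin Hval Hker c1 c2 c3 c4 c5 c6 c7 c8 c9 c10 c11 c12.
have P0 : phi 0%R = 1%R := phi0 HU (isT : (1 <= 7 <= 12)%N) Hlin Hval.
rewrite /nf.
have [Z4|N4] := eqVneq c4 0%R; last first.
  right; have [t Ht] := phi_ne1 Ha0 (mulf_neq0 Hs N4).
  rewrite (_ : (x _ _ * _) = (x 1 c1 * x 2 c2 * x 3 c3) * (x 4 c4) * (x 5 c5 * (x 6 c6 * (x 7 c7 * (x 8 c8 * (x 9 c9 * (x 10 c10 * (x 11 c11 * (x 12 c12 * 1))))))))); last by rewrite ?mul1g !mulgA.
  apply: wit_strip; [by inV HU | by inV HU |].
  apply: (wit_of HU (a := 7) _ Hlin Hval (w := x 3 t)); [by [] | by inV HU | by csimp HU | phitac Hphi P0 Ht].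
rewrite Z4 (x0 HU) // ?mul1g.
by left; inV HU.
Qed.

Lemma root8 (lam : 'CF(Vgroup x 8)) s : (s != 0)%R -> lam \is a linear_char ->
  (forall d, lam (x 8 d) = phi (s * d)%R) ->
  (forall g : nat, g \in posroots -> ht 8 < ht g -> Xset x g \subset cfker lam) ->
  forall c1 c2 c3 c4 c5 c6 c7 c8 c9 c10 c11 c12,
  nf x c1 c2 c3 c4 c5 c6 c7 c8 c9 c10 c11 c12 \in Vgroup x 8 \/
  wit lam (nf x c1 c2 c3 c4 c5 c6 c7 c8 c9 c10 c11 c12).
Proof.
move=> Hs Hlin Hval Hker c1 c2 c3 c4 c5 c6 c7 c8 c9 c10 c11 c12.
have P0 : phi 0%R = 1%R := phi0 HU (isT : (1 <= 8 <= 12)%N) Hlin Hval.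
rewrite /nf.
have [Z1|N1] := eqVneq c1 0%R; last first.
  right; have [t Ht] := phi_ne1 Ha0 (mulf_neq0 Hs N1).
  rewrite (_ : (x _ _ * _) = 1 * (x 1 c1 * x 2 c2) * (x 3 c3 * (x 4 c4 * (x 5 c5 * (x 6 c6 * (x 7 c7 * (x 8 c8 * (x 9 c9 * (x 10 c10 * (x 11 c11 * (x 12 c12 * 1))))))))))); last by rewrite ?mul1g !mulgA.
  apply: wit_strip; [by inV HU | by inV HU |].
  apply: (wit_of HU (a := 8) _ Hlin Hval (w := x 6 t)); [by [] | by inV HU | by csimp HU | phitac Hphi P0 Ht].
rewrite Z1 (x0 HU) // ?mul1g.
have [Z2|N2] := eqVneq c2 0%R; last first.
  right; have [t Ht] := phi_ne1 Ha0 (mulf_neq0 Hs N2).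
  rewrite (_ : (x _ _ * _) = 1 * (x 2 c2) * (x 3 c3 * (x 4 c4 * (x 5 c5 * (x 6 c6 * (x 7 c7 * (x 8 c8 * (x 9 c9 * (x 10 c10 * (x 11 c11 * (x 12 c12 * 1))))))))))); last by rewrite ?mul1g !mulgA.
  apply: wit_strip; [by inV HU | by inV HU |].
  apply: (wit_of HU (a := 8) _ Hlin Hval (w := x 5 t)); [by [] | by inV HU | by csimp HU | phitac Hphi P0 Ht].
rewrite Z2 (x0 HU) // ?mul1g.
by left; inV HU.
Qed.

Lemma root10 (lam : 'CF(Vgroup x 10)) s : (s != 0)%R -> lam \is a linear_char ->
  (forall d, lam (x 10 d) = phi (s * d)%R) ->
  (forall g : nat, g \in posroots -> ht 10 < ht g -> Xset x g \subset cfker lam) ->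
  forall c1 c2 c3 c4 c5 c6 c7 c8 c9 c10 c11 c12,
  nf x c1 c2 c3 c4 c5 c6 c7 c8 c9 c10 c11 c12 \in Vgroup x 10 \/
  wit lam (nf x c1 c2 c3 c4 c5 c6 c7 c8 c9 c10 c11 c12).
Proof.
move=> Hs Hlin Hval Hker c1 c2 c3 c4 c5 c6 c7 c8 c9 c10 c11 c12.
have P0 : phi 0%R = 1%R := phi0 HU (isT : (1 <= 10 <= 12)%N) Hlin Hval.
rewrite /nf.
have [Z2|N2] := eqVneq c2 0%R; last first.
  right; have [t Ht] := phi_ne1 Ha0 (mulf_neq0 Hs N2).
  rewrite (_ : (x _ _ * _) = (x 1 c1) * (x 2 c2 * x 3 c3 * x 4 c4) * (x 5 c5 * (x 6 c6 * (x 7 c7 * (x 8 c8 * (x 9 c9 * (x 10 c10 * (x 11 c11 * (x 12 c12 * 1))))))))); last by rewrite ?mul1g !mulgA.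
  apply: wit_strip; [by inV HU | by inV HU |].
  apply: (wit_of HU (a := 10) _ Hlin Hval (w := x 7 t)); [by [] | by inV HU | by csimp HU | phitac Hphi P0 Ht].
rewrite Z2 (x0 HU) // ?mul1g.
have [Z4|N4] := eqVneq c4 0%R; last first.
  right; have [t Ht] := phi_ne1 Ha0 (mulf_neq0 Hs N4).
  rewrite (_ : (x _ _ * _) = (x 1 c1 * x 3 c3) * (x 4 c4) * (x 5 c5 * (x 6 c6 * (x 7 c7 * (x 8 c8 * (x 9 c9 * (x 10 c10 * (x 11 c11 * (x 12 c12 * 1))))))))); last by rewrite ?mul1g !mulgA.
  apply: wit_strip; [by inV HU | by inV HU |].
  apply: (wit_of HU (a := 10) _ Hlin Hval (w := x 6 t)); [by [] | by inV HU | by csimp HU | phitac Hphi P0 Ht].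
rewrite Z4 (x0 HU) // ?mul1g.
by left; inV HU.
Qed.

Lemma root11 (lam : 'CF(Vgroup x 11)) s : (s != 0)%R -> lam \is a linear_char ->
  (forall d, lam (x 11 d) = phi (s * d)%R) ->
  (forall g : nat, g \in posroots -> ht 11 < ht g -> Xset x g \subset cfker lam) ->
  forall c1 c2 c3 c4 c5 c6 c7 c8 c9 c10 c11 c12,
  nf x c1 c2 c3 c4 c5 c6 c7 c8 c9 c10 c11 c12 \in Vgroup x 11 \/
  wit lam (nf x c1 c2 c3 c4 c5 c6 c7 c8 c9 c10 c11 c12).
Proof.
move=> Hs Hlin Hval Hker c1 c2 c3 c4 c5 c6 c7 c8 c9 c10 c11 c12.
have P0 : phi 0%R = 1%R := phi0 HU (isT : (1 <= 11 <= 12)%N) Hlin Hval.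
rewrite /nf.
have [Z1|N1] := eqVneq c1 0%R; last first.
  right; have [t Ht] := phi_ne1 Ha0 (mulf_neq0 Hs N1).
  rewrite (_ : (x _ _ * _) = 1 * (x 1 c1 * x 2 c2 * x 3 c3 * x 4 c4) * (x 5 c5 * (x 6 c6 * (x 7 c7 * (x 8 c8 * (x 9 c9 * (x 10 c10 * (x 11 c11 * (x 12 c12 * 1))))))))); last by rewrite ?mul1g !mulgA.
  apply: wit_strip; [by inV HU | by inV HU |].
  apply: (wit_ofN HU Ha0 (a := 11) _ Hlin Hval Hker (w := x 10 t)); [by [] | by inV HU | by csimp HU | by apply: xN | phitac Hphi P0 Ht].
rewrite Z1 (x0 HU) // ?mul1g.
have [Z2|N2] := eqVneq c2 0%R; last first.
  right; have [t Ht] := phi_ne1 Ha0 (mulf_neq0 Hs N2).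
  rewrite (_ : (x _ _ * _) = 1 * (x 2 c2 * x 3 c3 * x 4 c4) * (x 5 c5 * (x 6 c6 * (x 7 c7 * (x 8 c8 * (x 9 c9 * (x 10 c10 * (x 11 c11 * (x 12 c12 * 1))))))))); last by rewrite ?mul1g !mulgA.
  apply: wit_strip; [by inV HU | by inV HU |].
  apply: (wit_ofN HU Ha0 (a := 11) _ Hlin Hval Hker (w := x 9 t)); [by [] | by inV HU | by csimp HU | by apply: xN | phitac Hphi P0 Ht].
rewrite Z2 (x0 HU) // ?mul1g.
have [Z4|N4] := eqVneq c4 0%R; last first.
  right; have [t Ht] := phi_ne1 Ha0 (mulf_neq0 Hs N4).
  rewrite (_ : (x _ _ * _) = (x 3 c3) * (x 4 c4) * (x 5 c5 * (x 6 c6 * (x 7 c7 * (x 8 c8 * (x 9 c9 * (x 10 c10 * (x 11 c11 * (x 12 c12 * 1))))))))); last by rewrite ?mul1g !mulgA.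
  apply: wit_strip; [by inV HU | by inV HU |].
  apply: (wit_of HU (a := 11) _ Hlin Hval (w := x 8 t)); [by [] | by inV HU | by csimp HU | phitac Hphi P0 Ht].
rewrite Z4 (x0 HU) // ?mul1g.
by left; inV HU.
Qed.

End Roots.

Section Root9.
Local Close Scope ring_scope.
Local Open Scope group_scope.
Variables (F : finFieldType) (gT : finGroupType) (U : {group gT}) (x : nat -> F -> gT).
Hypothesis HU : is_D4_unipotent U x.
Variable phi : F -> algC.
Hypothesis Hphi : forall a b : F, phi (a + b)%R = (phi a * phi b)%R.
Variable a0 : F.
Hypothesis Ha0 : (phi a0 != 1)%R.

Lemma root9 (lam : 'CF(Vgroup x 9)) s : (s != 0)%R -> lam \is a linear_char ->
  (forall d, lam (x 9 d) = phi (s * d)%R) ->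
  (forall g : nat, g \in posroots -> ht 9 < ht g -> Xset x g \subset cfker lam) ->
  forall c1 c2 c3 c4 c5 c6 c7 c8 c9 c10 c11 c12,
  nf x c1 c2 c3 c4 c5 c6 c7 c8 c9 c10 c11 c12 \in Vgroup x 9 \/
  wit lam (nf x c1 c2 c3 c4 c5 c6 c7 c8 c9 c10 c11 c12).
Proof.
move=> Hs Hlin Hval Hker c1 c2 c3 c4 c5 c6 c7 c8 c9 c10 c11 c12.
have P0 : phi 0%R = 1%R := phi0 HU (isT : (1 <= 9 <= 12)%N) Hlin Hval.
rewrite /nf.
have [Z1|N1] := eqVneq c1 0%R; last first.
  right; have [t Ht] := phi_ne1 Ha0 (mulf_neq0 Hs N1).
  rewrite (_ : (x _ _ * _) = x 2 c2 * (x 1 c1 * x 3 c3 * x 4 c4) * (x 5 c5 * (x 6 c6 * (x 7 c7 * (x 8 c8 * (x 9 c9 * (x 10 c10 * (x 11 c11 * (x 12 c12 * 1))))))))); last first.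
    by rewrite mulgA (commx HU (i := 1) (j := 2)) // !mulgA.
  apply: wit_strip; [by inV HU | by inV HU |].
  apply: (wit_of HU (a := 9) _ Hlin Hval (w := x 7 t)); [by [] | by inV HU | by csimp HU | phitac Hphi P0 Ht].
rewrite Z1 (x0 HU) // ?mul1g.
have [Z4|N4] := eqVneq c4 0%R; last first.
  right; have [t Ht] := phi_ne1 Ha0 (mulf_neq0 Hs N4).
  rewrite (_ : (x _ _ * _) = (x 2 c2 * x 3 c3) * x 4 c4 * (x 5 c5 * (x 6 c6 * (x 7 c7 * (x 8 c8 * (x 9 c9 * (x 10 c10 * (x 11 c11 * (x 12 c12 * 1))))))))); last by rewrite !mulgA.
  apply: wit_strip; [by inV HU | by inV HU |].
  apply: (wit_of HU (a := 9) _ Hlin Hval (w := x 5 t)); [by [] | by inV HU | by csimp HU | phitac Hphi P0 Ht].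
rewrite Z4 (x0 HU) // ?mul1g.
by left; inV HU.
Qed.

End Root9.

Unset Implicit Arguments.

Theorem proposition3p3 (F : finFieldType) (gT : finGroupType)
  (U : {group gT}) (x : nat -> F -> gT) (phi : F -> algC) :
  is_D4_unipotent U x ->
  (forall a b : F, phi (a + b) = phi a * phi b) ->
  (exists a : F, phi a != 1) ->
  forall a : nat, a \in posroots ->
  forall lam : F -> 'CF(Vgroup x a),
  (forall s : F, s != 0 ->
     [/\ lam s \is a linear_char,
         forall d : F, lam s (x a d) = phi (s * d) &
         forall g : nat, g \in posroots -> (ht a < ht g)%N ->
           Xset x g \subset cfker (lam s)]) ->
  [/\ forall s : F, s != 0 -> 'Ind[U] (lam s) \in irr U,
      {in [pred s : F | s != 0] &, injective (fun s => 'Ind[U] (lam s))} &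
      forall s : F, s != 0 -> forall d : F,
        'Ind[U] (lam s) (x a d) = 'Ind[U] (lam s) 1%g * phi (s * d)].
Proof.
move=> HU Hphi [a0 Ha0] a Ha lam Hlam.
have Ha' : (1 <= a <= 12)%N by move: Ha; rewrite /posroots mem_iota; lia.
have HX : forall s, s != 0 -> forall d : F,
    'Ind[U] (lam s) (x a d) = 'Ind[U] (lam s) 1%g * phi (s * d).
  move=> s Hs d; have [Hlin Hval Hker] := Hlam s Hs.
  exact: (Ind_Xa HU Ha0 Ha' Hlin Hval Hker).
split=> //.
- move=> s Hs; have [Hlin Hval Hker] := Hlam s Hs.
  apply: (Ind_irr HU Hlin) => y /(U_prod HU) [d ->].
  have [c1 [c2 [c3 [c4 [c5 [c6 [c7 [c8 [c9 [c10 [c11 [c12 ->]]]]]]]]]]]] := prodx_nf x d.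
  move: Ha; rewrite /posroots /= !inE.
  case/orP=> [/eqP Ea|]; first by subst a; eapply (root1 HU); eassumption.
  case/orP=> [/eqP Ea|]; first by subst a; eapply (root2 HU); eassumption.
  case/orP=> [/eqP Ea|]; first by subst a; eapply (root3 HU); eassumption.
  case/orP=> [/eqP Ea|]; first by subst a; eapply (root4 HU); eassumption.
  case/orP=> [/eqP Ea|]; first by subst a; eapply (root5 HU); eassumption.
  case/orP=> [/eqP Ea|]; first by subst a; eapply (root6 HU); eassumption.
  case/orP=> [/eqP Ea|]; first by subst a; eapply (root7 HU); eassumption.
  case/orP=> [/eqP Ea|]; first by subst a; eapply (root8 HU); eassumption.
  case/orP=> [/eqP Ea|]; first by subst a; eapply (root9 HU); eassumption.
  case/orP=> [/eqP Ea|]; first by subst a; eapply (root10 HU); eassumption.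
  case/orP=> [/eqP Ea|]; first by subst a; eapply (root11 HU); eassumption.
  move/eqP=> Ea; subst a.
  eapply (root12 HU); eassumption.
- move=> s t; rewrite !inE => Hs Ht E.
  have E1 : 'Ind[U] (lam s) 1%g = 'Ind[U] (lam t) 1%g by rewrite E.
  have [Hlin Hval Hker] := Hlam s Hs.
  have [Hlin' Hval' Hker'] := Hlam t Ht.
  have P0 : phi 0 = 1 := phi0 HU Ha' Hlin Hval.
  have I1 : 'Ind[U] (lam s) 1%g != 0.
    rewrite cfInd1 ?(VsubU HU) // lin_char1 // mulr1 pnatr_eq0 -lt0n.
    exact: indexg_gt0.
  apply/eqP; rewrite -subr_eq0; apply/negPn/negP => Hst.
  have Hd : forall d, phi (s * d) = phi (t * d).
    move=> d; have H1 := HX s Hs d; rewrite E (HX t Ht d) in H1.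
    have I1t : 'Ind[U] (lam t) 1%g != 0 by rewrite -E.
    by apply: (mulfI I1t); rewrite H1.
  have := Hd (a0 / (s - t)).
  rewrite (_ : s * (a0 / (s - t)) = t * (a0 / (s - t)) + a0); last first.
    by field.
  rewrite Hphi => E2; move/negP: Ha0; apply; apply/eqP.
  have Hnz : phi (t * (a0 / (s - t))) != 0.
    apply/eqP => H0; move: P0; rewrite -(subrr (t * (a0 / (s - t)))) Hphi H0 mul0r.
    by move/eqP; rewrite eq_sym oner_eq0.
  by apply: (mulfI Hnz); rewrite E2 mulr1.
Qed.
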